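(* Let $S\subset\mathbb{P}^3$ be the cubic surface $t_1t_2(t_1+t_2)=t_3^2t_4$, and let $U\subset S$ be the open subset obtained by deleting the six lines $t_i=t_j=0$ and $t_j=t_1+t_2=0$ for $i\in\{1,2\}$, $j\in\{3,4\}$. Let $N_U(B)=\#\{x\in U(\mathbb{Q}):H(x)\leq B\}$. For $v\in\mathbb{R}$ and $\mathbf{s},\mathbf{u},\mathbf{y}\in\mathbb{R}^3$ define $$\Psi(v,\mathbf{s},\mathbf{u},\mathbf{y})=\max\{|s_1s_2s_3|,\ |u_1^2u_2^2u_3^2v^3y_1y_2y_3|,\ |s_1u_1^2u_2u_3v^2y_1^2|,\ |s_2u_1u_2^2u_3v^2y_2^2|\}.$$ Then $N_U(B)$ equals $2$ times the number of $(v,\mathbf{s},\mathbf{u},\mathbf{y})$ with $v\in\mathbb{N}$, $\mathbf{s}=(s_1,s_2,s_3)\in\mathbb{N}^3$, $\mathbf{u}=(u_1,u_2,u_3)\in\mathbb{Z}^3$, $\mathbf{y}=(y_1,y_2,y_3)\in\mathbb{N}^3$ such that $$u_3>0,\quad \Psi(v,\mathbf{s},\mathbf{u},\mathbf{y})\leq B,\quad s_1u_1y_1^2+s_2u_2y_2^2+s_3u_3y_3^2=0,$$ $$|\mu(u_1u_2u_3)|=1,\quad \gcd(s_1s_2s_3,u_1u_2u_3v)=1,\quad \gcd(y_i,y_j)=1,\quad \gcd(y_i,s_j,s_k)=1,$$ where $i,j,k$ denote distinct elements of $\{1,2,3\}$.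
   Context: For $x\in\mathbb{P}^{3}(\mathbb{Q})$ written as $x=[\mathbf{t}]$ with $\mathbf{t}\in\mathbb{Z}^4$ primitive, $H(x)=\max_i|t_i|$. $\mathbb{N}=\{1,2,3,\dots\}$ and $\mu$ is the Möbius function (so $|\mu(n)|=1$ means $n$ is square-free). *)

(* Defs.v *)
From HB Require Import structures.
From mathcomp Require Import all_boot all_order all_algebra.
From mathcomp Require Import finmap boolp classical_sets functions cardinality reals.
Set Implicit Arguments. Unset Strict Implicit. Unset Printing Implicit Defensive.
Import Order.TTheory GRing.Theory Num.Theory.
Local Open Scope ring_scope.

Definition mobius (n : nat) : int :=
  if n == 0%N then 0
  else if all (fun p => ~~ (p * p %| n)%N) (primes n)
       then (-1) ^+ size (primes n) else 0.

Definition mobiusz (n : int) : int := mobius `|n|%N.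

(* Points of P^3(Q): each point is represented by its unique primitive
   integer vector (t1,t2,t3,t4) whose first nonzero coordinate is positive. *)
Definition pt := (int * int * int * int)%type.

Definition primitive4 (t : pt) : bool :=
  let '(a, b, c, d) := t in gcdz a (gcdz b (gcdz c d)) == 1%N.

Definition first_nonzero_pos (t : pt) : bool :=
  let '(a, b, c, d) := t in
  (0 < a) || ((a == 0) && ((0 < b) || ((b == 0) && ((0 < c) || ((c == 0) && (0 < d)))))).

Definition projrep (t : pt) : bool := primitive4 t && first_nonzero_pos t.

Definition height (t : pt) : int :=
  let '(a, b, c, d) := t in
  Num.max `|a| (Num.max `|b| (Num.max `|c| `|d|)).

Definition onS (t : pt) : bool :=
  let '(a, b, c, d) := t in a * b * (a + b) == c ^+ 2 * d.

Definition on_lines (t : pt) : bool :=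
  let '(a, b, c, d) := t in
  [|| (a == 0) && (c == 0), (a == 0) && (d == 0), (b == 0) && (c == 0),
      (b == 0) && (d == 0), (c == 0) && (a + b == 0) | (d == 0) && (a + b == 0)].

Definition inU (t : pt) : bool := onS t && ~~ on_lines t.

Definition NU_set (R : realType) (B : R) : set pt :=
  [set t | projrep t /\ inU t /\ (height t)%:~R <= B].

Definition int3 := (int * int * int)%type.
Definition param := (int * int3 * int3 * int3)%type.

Definition Psi (v : int) (s u y : int3) : int :=
  let '(s1, s2, s3) := s in let '(u1, u2, u3) := u in let '(y1, y2, y3) := y in
  Num.max `|s1 * s2 * s3|
    (Num.max `|u1 ^+ 2 * u2 ^+ 2 * u3 ^+ 2 * v ^+ 3 * y1 * y2 * y3|
      (Num.max `|s1 * u1 ^+ 2 * u2 * u3 * v ^+ 2 * y1 ^+ 2|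
               `|s2 * u1 * u2 ^+ 2 * u3 * v ^+ 2 * y2 ^+ 2|)).

Definition param_ok (R : realType) (B : R) (p : param) : Prop :=
  let '(v, s, u, y) := p in
  let '(s1, s2, s3) := s in let '(u1, u2, u3) := u in let '(y1, y2, y3) := y in
  [/\ 0 < v, [/\ 0 < s1, 0 < s2 & 0 < s3], 0 < u3, [/\ 0 < y1, 0 < y2 & 0 < y3] &
   [/\ (Psi v s u y)%:~R <= B,
       s1 * u1 * y1 ^+ 2 + s2 * u2 * y2 ^+ 2 + s3 * u3 * y3 ^+ 2 = 0,
       `|mobiusz (u1 * u2 * u3)| = 1,
       gcdz (s1 * s2 * s3) (u1 * u2 * u3 * v) = 1%N &
       [/\ [/\ gcdz y1 y2 = 1%N, gcdz y1 y3 = 1%N & gcdz y2 y3 = 1%N] &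
           [/\ gcdz y1 (gcdz s2 s3) = 1%N, gcdz y2 (gcdz s1 s3) = 1%N
             & gcdz y3 (gcdz s1 s2) = 1%N]]]].

Definition param_set (R : realType) (B : R) : set param := [set p | param_ok B p].

(* Main.v *)
Require Import Defs.
From HB Require Import structures.
From mathcomp Require Import all_boot all_order all_algebra.
From mathcomp Require Import finmap boolp classical_sets functions cardinality reals.
From mathcomp Require Import zify ring.
From Stdlib Require Import Lia.
Import Order.TTheory GRing.Theory Num.Theory.

Definition m3 (x1 x2 x5 : nat) := minn x1 (minn x2 x5).
Definition fnu x1 x2 x5 (c e : nat) := if e == 0 then m3 x1 x2 x5 %/ 2 else 0.
Definition fmu x x1 x2 x5 (c e : nat) := if e == 0 then (x - m3 x1 x2 x5) %% 2 else 0.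
Definition feta x x1 x2 x5 (c e : nat) := if e == 0 then (x - m3 x1 x2 x5) %/ 2 else minn c (x %/ 2).
Definition fsig x (x1 x2 x5 c e : nat) := if e == 0 then 0 else x - 2 * minn c (x %/ 2).

Definition vconstr (s1 s2 s3 u1 u2 u3 v y1 y2 y3 : nat) : Prop :=
  [/\ u1 + u2 + u3 <= 1, s1 + s2 + s3 = 0 \/ u1 + u2 + u3 + v = 0,
      [/\ y1 = 0 \/ y2 = 0, y1 = 0 \/ y3 = 0 & y2 = 0 \/ y3 = 0] &
      [/\ y1 = 0 \/ s2 = 0 \/ s3 = 0, y2 = 0 \/ s1 = 0 \/ s3 = 0 & y3 = 0 \/ s1 = 0 \/ s2 = 0]].

Lemma mod2_small u y : u <= 1 -> (u + 2 * y) %% 2 = u.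
Proof. move=> h; lia. Qed.
Lemma div2_small u y : u <= 1 -> (u + 2 * y) %/ 2 = y.
Proof. move=> h; lia. Qed.

Lemma val_fwd s1 s2 s3 u1 u2 u3 v y1 y2 y3 x1 x2 x5 c e :
  vconstr s1 s2 s3 u1 u2 u3 v y1 y2 y3 ->
  x1 = s1 + u1 + (u1 + u2 + u3) + 2 * v + 2 * y1 ->
  x2 = s2 + u2 + (u1 + u2 + u3) + 2 * v + 2 * y2 ->
  x5 = s3 + u3 + (u1 + u2 + u3) + 2 * v + 2 * y3 ->
  c = 2 * (u1 + u2 + u3) + 3 * v + y1 + y2 + y3 ->
  e = s1 + s2 + s3 ->
  minn x1 x2 <= x5 -> minn x2 x5 <= x1 -> minn x1 x5 <= x2 ->
  [/\ fnu x1 x2 x5 c e = v,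
     [/\ fmu x1 x1 x2 x5 c e = u1, fmu x2 x1 x2 x5 c e = u2 & fmu x5 x1 x2 x5 c e = u3],
     [/\ feta x1 x1 x2 x5 c e = y1, feta x2 x1 x2 x5 c e = y2 & feta x5 x1 x2 x5 c e = y3] &
     [/\ fsig x1 x1 x2 x5 c e = s1, fsig x2 x1 x2 x5 c e = s2 & fsig x5 x1 x2 x5 c e = s3]].
Proof.
case=> Hu Hs [Hy12 Hy13 Hy23] [Hys1 Hys2 Hys3] E1 E2 E5 Ec Ee U1 U2 U3.
rewrite /fnu /fmu /feta /fsig.
case: eqP => He.
  have [Z1 [Z2 Z3]] : s1 = 0 /\ s2 = 0 /\ s3 = 0 by clear -He Ee; lia.
  have Hm : m3 x1 x2 x5 = (u1 + u2 + u3) + 2 * v.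
    rewrite /m3 E1 E2 E5; clear -Hu Hy12 Hy13 Hy23 Z1 Z2 Z3; lia.
  rewrite Hm.
  have -> : x1 - (u1 + u2 + u3 + 2 * v) = u1 + 2 * y1 by clear -E1 Z1; lia.
  have -> : x2 - (u1 + u2 + u3 + 2 * v) = u2 + 2 * y2 by clear -E2 Z2; lia.
  have -> : x5 - (u1 + u2 + u3 + 2 * v) = u3 + 2 * y3 by clear -E5 Z3; lia.
  have h1 : u1 <= 1 by clear -Hu; lia.
  have h2 : u2 <= 1 by clear -Hu; lia.
  have h3 : u3 <= 1 by clear -Hu; lia.
  by rewrite !mod2_small ?div2_small.
have [V0 [Z1 [Z2 Z3]]] : v = 0 /\ u1 = 0 /\ u2 = 0 /\ u3 = 0 by clear -Hs He Ee; lia.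
subst v u1 u2 u3 c e x1 x2 x5.
have : (y1 = 0 /\ y2 = 0 /\ y3 = 0) \/ (0 < y1 /\ y2 = 0 /\ y3 = 0) \/
       (y1 = 0 /\ 0 < y2 /\ y3 = 0) \/ (y1 = 0 /\ y2 = 0 /\ 0 < y3) by clear -Hy12 Hy13 Hy23; lia.
clear Hy12 Hy13 Hy23 Hs Hu.
case=> [[Y1[Y2 Y3]]|[[Y1[Y2 Y3]]|[[Y1[Y2 Y3]]|[Y1[Y2 Y3]]]]]; subst.
- split; [|split|split|split] => //; clear -He; lia.
- case: Hys1 => [|[S2|S3]]; first lia; subst.
  + have S3 : s3 = 0 by clear -U1 U2 U3 Y1; lia. subst. split; [|split|split|split] => //; clear -He Y1; lia.
  + have S2 : s2 = 0 by clear -U1 U2 U3 Y1; lia. subst. split; [|split|split|split] => //; clear -He Y1; lia.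
- case: Hys2 => [|[S1|S3]]; first lia; subst.
  + have S3 : s3 = 0 by clear -U1 U2 U3 Y2; lia. subst. split; [|split|split|split] => //; clear -He Y2; lia.
  + have S1 : s1 = 0 by clear -U1 U2 U3 Y2; lia. subst. split; [|split|split|split] => //; clear -He Y2; lia.
- case: Hys3 => [|[S1|S2]]; first lia; subst.
  + have S2 : s2 = 0 by clear -U1 U2 U3 Y3; lia. subst. split; [|split|split|split] => //; clear -He Y3; lia.
  + have S1 : s1 = 0 by clear -U1 U2 U3 Y3; lia. subst. split; [|split|split|split] => //; clear -He Y3; lia.
Qed.

Ltac asplit := rewrite /vconstr; repeat match goal with |- _ /\ _ => split | |- and3 _ _ _ => split | |- and4 _ _ _ _ => split | |- and5 _ _ _ _ _ => split end.

Lemma val_back x1 x2 x5 c e s1 s2 s3 u1 u2 u3 v y1 y2 y3 :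
  x1 + x2 + x5 = 2 * c + e ->
  x1 = 0 \/ x2 = 0 \/ c = 0 \/ e = 0 ->
  minn x1 x2 <= x5 -> minn x2 x5 <= x1 -> minn x1 x5 <= x2 ->
  v = fnu x1 x2 x5 c e ->
  u1 = fmu x1 x1 x2 x5 c e -> u2 = fmu x2 x1 x2 x5 c e -> u3 = fmu x5 x1 x2 x5 c e ->
  y1 = feta x1 x1 x2 x5 c e -> y2 = feta x2 x1 x2 x5 c e -> y3 = feta x5 x1 x2 x5 c e ->
  s1 = fsig x1 x1 x2 x5 c e -> s2 = fsig x2 x1 x2 x5 c e -> s3 = fsig x5 x1 x2 x5 c e ->
  vconstr s1 s2 s3 u1 u2 u3 v y1 y2 y3 /\
  [/\ x1 = s1 + u1 + (u1 + u2 + u3) + 2 * v + 2 * y1,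
      x2 = s2 + u2 + (u1 + u2 + u3) + 2 * v + 2 * y2,
      x5 = s3 + u3 + (u1 + u2 + u3) + 2 * v + 2 * y3,
      c = 2 * (u1 + u2 + u3) + 3 * v + y1 + y2 + y3 &
      e = s1 + s2 + s3].
Proof.
move=> Hsum Hg U1 U2 U3; rewrite /fnu /fmu /feta /fsig /m3.
case: eqP => He.
  subst e => -> -> -> -> -> -> -> -> -> ->.
  have : x1 = x2 /\ x1 <= x5 \/ x1 = x5 /\ x1 <= x2 \/ x2 = x5 /\ x2 <= x1.
    clear -U1 U2 U3; lia.
  clear -Hsum; case=> [[E h]|[[E h]|[E h]]].
  - have -> : minn x1 (minn x2 x5) = x1 by lia.
    asplit; lia.
  - have -> : minn x1 (minn x2 x5) = x1 by lia.
    asplit; lia.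
  - have -> : minn x1 (minn x2 x5) = x2 by lia.
    asplit; lia.
move=> -> -> -> -> -> -> -> -> -> ->.
case: (posnP c) => Hc.
  subst c; rewrite !min0n !muln0 !subn0.
  asplit; lia.
have : x1 = 0 /\ x2 = 0 \/ x1 = 0 /\ x5 = 0 \/ x2 = 0 /\ x5 = 0.
  clear -Hg Hc He U1 U2 U3; lia.
case=> [[E1 E2]|[[E1 E2]|[E1 E2]]]; rewrite E1 E2 in Hsum *; rewrite /= ?div0n ?minn0 ?muln0 ?subn0.
- have -> : x5 = 2 * c + e by lia.
  have -> : minn c ((2 * c + e) %/ 2) = c by clear; lia.
  asplit; lia.
- have -> : x2 = 2 * c + e by lia.
  have -> : minn c ((2 * c + e) %/ 2) = c by clear; lia.
  asplit; lia.
- have -> : x1 = 2 * c + e by lia.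
  have -> : minn c ((2 * c + e) %/ 2) = c by clear; lia.
  asplit; lia.
Qed.

Lemma val_gcd s1 s2 s3 u1 u2 u3 v y1 y2 y3 x1 x2 x5 c e :
  vconstr s1 s2 s3 u1 u2 u3 v y1 y2 y3 ->
  x1 = s1 + u1 + (u1 + u2 + u3) + 2 * v + 2 * y1 ->
  x2 = s2 + u2 + (u1 + u2 + u3) + 2 * v + 2 * y2 ->
  x5 = s3 + u3 + (u1 + u2 + u3) + 2 * v + 2 * y3 ->
  c = 2 * (u1 + u2 + u3) + 3 * v + y1 + y2 + y3 ->
  e = s1 + s2 + s3 ->
  minn x1 x2 <= x5 -> minn x2 x5 <= x1 -> minn x1 x5 <= x2 ->
  x1 = 0 \/ x2 = 0 \/ c = 0 \/ e = 0.
Proof.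
case=> Hu Hs [Hy12 Hy13 Hy23] [Hys1 Hys2 Hys3] E1 E2 E5 Ec Ee U1 U2 U3.
case: (posnP e) => He; first by lia.
have [V0 [Z1 [Z2 Z3]]] : v = 0 /\ u1 = 0 /\ u2 = 0 /\ u3 = 0 by clear -Hs He Ee; lia.
subst v u1 u2 u3 c e x1 x2 x5.
case: (posnP y1) => Y1; last (case: Hys1 => [|[S2|S3]]; [lia | lia | idtac]).
  case: (posnP y2) => Y2; last (case: Hys2 => [|[S1|S3]]; [lia | lia | idtac]).
    case: (posnP y3) => Y3; first lia.
    case: Hys3 => [|[S1|S2]]; lia.
  clear -U1 U2 U3 Y1 Y2 S3 Hy12 Hy23 Hy13; lia.
clear -U1 U2 U3 Y1 S3 Hy12 Hy23 Hy13; lia.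
Qed.

Definition mkn (K : nat) (f : nat -> nat) : nat :=
  \prod_(p < K) (if prime p then p ^ f p else 1).

Lemma mkn_gt0 K f : 0 < mkn K f.
Proof.
rewrite /mkn; elim/big_ind: _ => // [a b|i _]; first by rewrite muln_gt0 => ->.
by case: ifP => // /prime_gt0 p0; rewrite expn_gt0 p0.
Qed.

Lemma logn_mkn_if q K f : prime q -> logn q (mkn K f) = if q < K then f q else 0.
Proof.
move=> pq; elim: K => [|K IH]; first by rewrite /mkn big_ord0 logn1.
rewrite /mkn big_ord_recr /= -/(mkn K f) lognM ?mkn_gt0 //; last first.
  by case: ifP => // /prime_gt0 p0; rewrite expn_gt0 p0.
rewrite IH; case: (ltngtP q K) => h.
- rewrite ?ltnS ?(ltnW h).
  case: ifP => pK; last by rewrite logn1 addn0.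
  by rewrite lognX logn_prime // (ltn_eqF h) muln0 addn0.
- rewrite ?ltnS ?(leqNgt q K) ?h.
  case: ifP => pK; last by rewrite logn1 addn0.
  by rewrite lognX logn_prime // (gtn_eqF h) muln0 addn0.
- subst; rewrite ?ltnSn ?leqnn pq lognX logn_prime // eqxx muln1.
  by [].
Qed.

Lemma logn_mkn q K f : prime q -> (K <= q -> f q = 0) -> logn q (mkn K f) = f q.
Proof.
move=> pq Hf; rewrite logn_mkn_if //; case: ltnP => // h; by rewrite Hf.
Qed.

Lemma one_from_log g : 0 < g -> (forall p, prime p -> logn p g = 0) -> g = 1.
Proof.
move=> g0 H; apply: eqn_from_log => // p; rewrite logn1.
case pp: (prime p); first exact: H.
by rewrite /logn pp.
Qed.

Lemma gcd1_log a b : 0 < a -> 0 < b ->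
  gcdn a b = 1 <-> (forall p, prime p -> logn p a = 0 \/ logn p b = 0).
Proof.
move=> a0 b0; split.
  move=> g1 p pp; have := logn_gcd p a0 b0; rewrite g1 logn1; lia.
move=> H; apply: one_from_log; first by rewrite gcdn_gt0 a0.
move=> p pp; rewrite logn_gcd //; have := H p pp; lia.
Qed.

Lemma gcd3_log a b c : 0 < a -> 0 < b -> 0 < c ->
  gcdn a (gcdn b c) = 1 <->
  (forall p, prime p -> logn p a = 0 \/ logn p b = 0 \/ logn p c = 0).
Proof.
move=> a0 b0 c0; have g0 : 0 < gcdn b c by rewrite gcdn_gt0 b0.
rewrite gcd1_log //; split=> H p pp; have := H p pp; rewrite ?logn_gcd //; lia.
Qed.

Lemma gcd4_log a b c d : 0 < a -> 0 < b -> 0 < c -> 0 < d ->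
  gcdn a (gcdn b (gcdn c d)) = 1 <->
  (forall p, prime p -> logn p a = 0 \/ logn p b = 0 \/ logn p c = 0 \/ logn p d = 0).
Proof.
move=> a0 b0 c0 d0; have g0 : 0 < gcdn c d by rewrite gcdn_gt0 c0.
rewrite gcd3_log //; split=> H p pp; have := H p pp; rewrite ?logn_gcd //; lia.
Qed.

Lemma mobius_log n : @eq int (`|mobius n|)%R 1%R <-> 0 < n /\ (forall p, prime p -> logn p n <= 1).
Proof.
rewrite /mobius; case: (posnP n) => [->|n0]; first by split; [rewrite normr0 | case].
split.
  case: ifP => [/allP H _|]; last by rewrite normr0.
  split=> // p pp; case: (posnP (logn p n)) => [->//|].
  rewrite logn_gt0 => pn; have := H p pn.
  rewrite mulnn pfactor_dvdn //; lia.
case=> _ H; case: ifP => [_|/negP[]]; first by rewrite normrX normrN1 expr1n.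
apply/allP => p pn; have pp : prime p by move: pn; rewrite mem_primes => /andP[].
by rewrite mulnn pfactor_dvdn //; have := H p pp; lia.
Qed.

Definition P1N (V S1 S2 S3 a1 a2 a3 Y1 Y2 Y3 : nat) := S1 * a1 ^ 2 * a2 * a3 * V ^ 2 * Y1 ^ 2.
Definition P2N (V S1 S2 S3 a1 a2 a3 Y1 Y2 Y3 : nat) := S2 * a1 * a2 ^ 2 * a3 * V ^ 2 * Y2 ^ 2.
Definition P5N (V S1 S2 S3 a1 a2 a3 Y1 Y2 Y3 : nat) := S3 * a1 * a2 * a3 ^ 2 * V ^ 2 * Y3 ^ 2.
Definition T3N (V S1 S2 S3 a1 a2 a3 Y1 Y2 Y3 : nat) := a1 ^ 2 * a2 ^ 2 * a3 ^ 2 * V ^ 3 * Y1 * Y2 * Y3.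
Definition NN (V S1 S2 S3 a1 a2 a3 Y1 Y2 Y3 : nat) := S1 * S2 * S3.

Definition ultra (P1 P2 P5 : nat) : Prop := forall p, prime p ->
  [/\ minn (logn p P1) (logn p P2) <= logn p P5,
      minn (logn p P2) (logn p P5) <= logn p P1 &
      minn (logn p P1) (logn p P5) <= logn p P2].

Definition allpos (V S1 S2 S3 a1 a2 a3 Y1 Y2 Y3 : nat) : Prop :=
  [/\ 0 < V, [/\ 0 < S1, 0 < S2 & 0 < S3], [/\ 0 < a1, 0 < a2 & 0 < a3] &
      [/\ 0 < Y1, 0 < Y2 & 0 < Y3]].

Definition paramN (V S1 S2 S3 a1 a2 a3 Y1 Y2 Y3 : nat) : Prop :=
  allpos V S1 S2 S3 a1 a2 a3 Y1 Y2 Y3 /\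
  forall p, prime p -> vconstr (logn p S1) (logn p S2) (logn p S3)
     (logn p a1) (logn p a2) (logn p a3) (logn p V) (logn p Y1) (logn p Y2) (logn p Y3).

Ltac posi := repeat first [ assumption | done | rewrite muln_gt0; apply/andP; split
                          | rewrite expn_gt0; apply/orP; left ].

Lemma logs_N V S1 S2 S3 a1 a2 a3 Y1 Y2 Y3 p :
  allpos V S1 S2 S3 a1 a2 a3 Y1 Y2 Y3 ->
  let M := logn p a1 + logn p a2 + logn p a3 in
  [/\ logn p (P1N V S1 S2 S3 a1 a2 a3 Y1 Y2 Y3) =
        logn p S1 + logn p a1 + M + 2 * logn p V + 2 * logn p Y1,
      logn p (P2N V S1 S2 S3 a1 a2 a3 Y1 Y2 Y3) =
        logn p S2 + logn p a2 + M + 2 * logn p V + 2 * logn p Y2,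
      logn p (P5N V S1 S2 S3 a1 a2 a3 Y1 Y2 Y3) =
        logn p S3 + logn p a3 + M + 2 * logn p V + 2 * logn p Y3,
      logn p (T3N V S1 S2 S3 a1 a2 a3 Y1 Y2 Y3) =
        2 * M + 3 * logn p V + logn p Y1 + logn p Y2 + logn p Y3 &
      logn p (NN V S1 S2 S3 a1 a2 a3 Y1 Y2 Y3) = logn p S1 + logn p S2 + logn p S3].
Proof.
case=> V0 [S10 S20 S30] [a10 a20 a30] [Y10 Y20 Y30] M.
rewrite /P1N /P2N /P5N /T3N /NN /M.
split; rewrite !lognM ?lognX; try (by posi); lia.
Qed.

Lemma logn_small q n : 0 < n < q -> logn q n = 0.
Proof.
case/andP=> n0 nq; case: (posnP (logn q n)) => // h.
move: h; rewrite logn_gt0 mem_primes => /and3P[_ _ /(dvdn_leq n0)]; lia.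
Qed.

Section Inv.
Variables (P1 P2 P5 T3 N : nat).
Let K := (P1 + P2 + P5 + T3 + N).+1.
Let L f := mkn K (fun p => f (logn p P1) (logn p P2) (logn p P5) (logn p T3) (logn p N)).
Definition cV := L fnu.
Definition cS1 := L (fun x1 x2 x5 c e => fsig x1 x1 x2 x5 c e).
Definition cS2 := L (fun x1 x2 x5 c e => fsig x2 x1 x2 x5 c e).
Definition cS3 := L (fun x1 x2 x5 c e => fsig x5 x1 x2 x5 c e).
Definition ca1 := L (fun x1 x2 x5 c e => fmu x1 x1 x2 x5 c e).
Definition ca2 := L (fun x1 x2 x5 c e => fmu x2 x1 x2 x5 c e).
Definition ca3 := L (fun x1 x2 x5 c e => fmu x5 x1 x2 x5 c e).
Definition cY1 := L (fun x1 x2 x5 c e => feta x1 x1 x2 x5 c e).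
Definition cY2 := L (fun x1 x2 x5 c e => feta x2 x1 x2 x5 c e).
Definition cY3 := L (fun x1 x2 x5 c e => feta x5 x1 x2 x5 c e).

Lemma logn_L f q : prime q -> f 0 0 0 0 0 = 0 ->
  0 < P1 -> 0 < P2 -> 0 < P5 -> 0 < T3 -> 0 < N ->
  logn q (L f) = f (logn q P1) (logn q P2) (logn q P5) (logn q T3) (logn q N).
Proof.
move=> pq f0 h1 h2 h5 h3 hN; apply: logn_mkn => // Kq.
by rewrite !logn_small ?f0 ?h1 ?h2 ?h5 ?h3 ?hN //=; apply: leq_trans Kq; rewrite /K; lia.
Qed.
End Inv.

Lemma eq_log_prime m n : 0 < m -> 0 < n ->
  (forall p, prime p -> logn p m = logn p n) -> m = n.
Proof.
move=> m0 n0 H; apply: eqn_from_log => // p.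
case pp: (prime p); first exact: H.
by rewrite /logn pp.
Qed.

Lemma f0s :
  [/\ fnu 0 0 0 0 0 = 0, fmu 0 0 0 0 0 0 = 0, feta 0 0 0 0 0 0 = 0 & fsig 0 0 0 0 0 0 = 0].
Proof. by []. Qed.

Section Core.
Variables (V S1 S2 S3 a1 a2 a3 Y1 Y2 Y3 : nat).
Let X1 := P1N V S1 S2 S3 a1 a2 a3 Y1 Y2 Y3.
Let X2 := P2N V S1 S2 S3 a1 a2 a3 Y1 Y2 Y3.
Let X5 := P5N V S1 S2 S3 a1 a2 a3 Y1 Y2 Y3.
Let X3 := T3N V S1 S2 S3 a1 a2 a3 Y1 Y2 Y3.
Let XN := NN V S1 S2 S3 a1 a2 a3 Y1 Y2 Y3.

Lemma allpos_X : allpos V S1 S2 S3 a1 a2 a3 Y1 Y2 Y3 ->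
  [/\ 0 < X1, 0 < X2, 0 < X5, 0 < X3 & 0 < XN].
Proof.
case=> V0 [S10 S20 S30] [a10 a20 a30] [Y10 Y20 Y30].
by rewrite /X1 /X2 /X5 /X3 /XN /P1N /P2N /P5N /T3N /NN; split; posi.
Qed.

Lemma fwd_core : paramN V S1 S2 S3 a1 a2 a3 Y1 Y2 Y3 -> ultra X1 X2 X5 ->
  gcdn X1 (gcdn X2 (gcdn X3 XN)) = 1 /\
  [/\ cV X1 X2 X5 X3 XN = V,
      [/\ cS1 X1 X2 X5 X3 XN = S1, cS2 X1 X2 X5 X3 XN = S2 & cS3 X1 X2 X5 X3 XN = S3],
      [/\ ca1 X1 X2 X5 X3 XN = a1, ca2 X1 X2 X5 X3 XN = a2 & ca3 X1 X2 X5 X3 XN = a3] &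
      [/\ cY1 X1 X2 X5 X3 XN = Y1, cY2 X1 X2 X5 X3 XN = Y2 & cY3 X1 X2 X5 X3 XN = Y3]].
Proof.
move=> [ap Hc] Hu.
have [x10 x20 x50 x30 xN0] := allpos_X ap.
move: (ap) => [V0 [S10 S20 S30] [a10 a20 a30] [Y10 Y20 Y30]].
have key p : prime p ->
  let x1 := logn p X1 in let x2 := logn p X2 in let x5 := logn p X5 in
  let c := logn p X3 in let e := logn p XN in
  [/\ fnu x1 x2 x5 c e = logn p V,
     [/\ fmu x1 x1 x2 x5 c e = logn p a1, fmu x2 x1 x2 x5 c e = logn p a2 & fmu x5 x1 x2 x5 c e = logn p a3],
     [/\ feta x1 x1 x2 x5 c e = logn p Y1, feta x2 x1 x2 x5 c e = logn p Y2 & feta x5 x1 x2 x5 c e = logn p Y3] &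
     [/\ fsig x1 x1 x2 x5 c e = logn p S1, fsig x2 x1 x2 x5 c e = logn p S2 & fsig x5 x1 x2 x5 c e = logn p S3]].
  move=> pp x1 x2 x5 c e.
  have [E1 E2 E5 E3 EN] := @logs_N _ _ _ _ _ _ _ _ _ _ p ap.
  have [U1 U2 U3] := Hu p pp.
  by apply: val_fwd (Hc p pp) E1 E2 E5 E3 EN U1 U2 U3.
split.
  apply/gcd4_log => // p pp.
  have [E1 E2 E5 E3 EN] := @logs_N _ _ _ _ _ _ _ _ _ _ p ap.
  have [U1 U2 U3] := Hu p pp.
  have := @val_gcd _ _ _ _ _ _ _ _ _ _ _ _ _ _ _ (Hc p pp) E1 E2 E5 E3 EN U1 U2 U3; exact.
have [f1 f2 f3 f4] := f0s.
have L q f : prime q -> f 0 0 0 0 0 = 0 ->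
  logn q (mkn (X1 + X2 + X5 + X3 + XN).+1
     (fun p => f (logn p X1) (logn p X2) (logn p X5) (logn p X3) (logn p XN))) =
  f (logn q X1) (logn q X2) (logn q X5) (logn q X3) (logn q XN).
  by move=> pq h; apply: logn_L.
split; [|split|split|split];
  apply: eq_log_prime; rewrite ?mkn_gt0 // => p pp; rewrite L //; by case: (key p pp) => ? [? ? ?] [? ? ?] [? ? ?].
Qed.
End Core.

Lemma back_core P1 P2 P5 T3 N :
  0 < P1 -> 0 < P2 -> 0 < P5 -> 0 < T3 -> 0 < N ->
  P1 * P2 * P5 = T3 ^ 2 * N ->
  gcdn P1 (gcdn P2 (gcdn T3 N)) = 1 ->
  ultra P1 P2 P5 ->
  let V := cV P1 P2 P5 T3 N in
  let S1 := cS1 P1 P2 P5 T3 N in let S2 := cS2 P1 P2 P5 T3 N in let S3 := cS3 P1 P2 P5 T3 N in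
  let a1 := ca1 P1 P2 P5 T3 N in let a2 := ca2 P1 P2 P5 T3 N in let a3 := ca3 P1 P2 P5 T3 N in
  let Y1 := cY1 P1 P2 P5 T3 N in let Y2 := cY2 P1 P2 P5 T3 N in let Y3 := cY3 P1 P2 P5 T3 N in
  paramN V S1 S2 S3 a1 a2 a3 Y1 Y2 Y3 /\
  [/\ P1 = P1N V S1 S2 S3 a1 a2 a3 Y1 Y2 Y3, P2 = P2N V S1 S2 S3 a1 a2 a3 Y1 Y2 Y3,
      P5 = P5N V S1 S2 S3 a1 a2 a3 Y1 Y2 Y3, T3 = T3N V S1 S2 S3 a1 a2 a3 Y1 Y2 Y3 &
      N = NN V S1 S2 S3 a1 a2 a3 Y1 Y2 Y3].
Proof.
move=> h1 h2 h5 h3 hN Heq Hg Hu V S1 S2 S3 a1 a2 a3 Y1 Y2 Y3.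
have [f1 f2 f3 f4] := f0s.
have L q f : prime q -> f 0 0 0 0 0 = 0 ->
  logn q (mkn (P1 + P2 + P5 + T3 + N).+1
     (fun p => f (logn p P1) (logn p P2) (logn p P5) (logn p T3) (logn p N))) =
  f (logn q P1) (logn q P2) (logn q P5) (logn q T3) (logn q N).
  by move=> pq h; apply: logn_L.
have ap : allpos V S1 S2 S3 a1 a2 a3 Y1 Y2 Y3 by split; rewrite ?mkn_gt0.
have key p : prime p ->
  vconstr (logn p S1) (logn p S2) (logn p S3) (logn p a1) (logn p a2) (logn p a3)
    (logn p V) (logn p Y1) (logn p Y2) (logn p Y3) /\
  [/\ logn p P1 = logn p S1 + logn p a1 + (logn p a1 + logn p a2 + logn p a3) + 2 * logn p V + 2 * logn p Y1,
      logn p P2 = logn p S2 + logn p a2 + (logn p a1 + logn p a2 + logn p a3) + 2 * logn p V + 2 * logn p Y2,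
      logn p P5 = logn p S3 + logn p a3 + (logn p a1 + logn p a2 + logn p a3) + 2 * logn p V + 2 * logn p Y3,
      logn p T3 = 2 * (logn p a1 + logn p a2 + logn p a3) + 3 * logn p V + logn p Y1 + logn p Y2 + logn p Y3 &
      logn p N = logn p S1 + logn p S2 + logn p S3].
  move=> pp.
  have hs : logn p P1 + logn p P2 + logn p P5 = 2 * logn p T3 + logn p N.
    have := congr1 (logn p) Heq; rewrite !lognM ?lognX ?muln_gt0 ?expn_gt0 ?h1 ?h2 ?h5 ?h3 ?hN //; lia.
  have hg := (proj1 (@gcd4_log _ _ _ _ h1 h2 h3 hN) Hg p pp).
  have [U1 U2 U3] := Hu p pp.
  apply: (@val_back _ _ _ _ _ _ _ _ _ _ _ _ _ _ _ hs hg U1 U2 U3); by apply: logn_L.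
split; first by split=> // p pp; case: (key p pp).
have [x10 x20 x50 x30 xN0] := @allpos_X _ _ _ _ _ _ _ _ _ _ ap.
split; apply: eq_log_prime => // p pp; have [E1 E2 E5 E3 EN] := @logs_N _ _ _ _ _ _ _ _ _ _ p ap;
  case: (key p pp) => _ [K1 K2 K5 K3 KN]; lia.
Qed.

Section IntPart.
Local Open Scope ring_scope.

Lemma ultra_min (a b : int) p : prime p -> a != 0 -> b != 0 -> a + b != 0 ->
  (minn (logn p `|a|) (logn p `|b|) <= logn p `|(a + b)%R|)%N.
Proof.
move=> pp a0 b0 ab0.
set k := minn _ _.
have da : (p ^ k %| `|a|)%N by rewrite pfactor_dvdn // ?absz_gt0 // geq_minl.
have db : (p ^ k %| `|b|)%N by rewrite pfactor_dvdn // ?absz_gt0 // geq_minr.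
have : ((p ^ k)%:Z %| a + b)%Z.
  have da' : ((p ^ k)%:Z %| a)%Z by rewrite dvdzE absz_nat.
  have db' : ((p ^ k)%:Z %| b)%Z by rewrite dvdzE absz_nat.
  move: da' db' => /dvdzP[q1 ->] /dvdzP[q2 ->].
  by apply/dvdzP; exists (q1 + q2); rewrite mulrDl.
by rewrite dvdzE absz_nat pfactor_dvdn // absz_gt0.
Qed.

Lemma ultraZ (t1 t2 : int) : t1 != 0 -> t2 != 0 -> t1 + t2 != 0 ->
  ultra `|t1|%N `|t2|%N `|(t1 + t2)%R|%N.
Proof.
move=> h1 h2 h12 p pp; split.
- exact: ultra_min.
- have := @ultra_min (t1 + t2) (- t2) p pp h12; rewrite oppr_eq0 abszN addrK minnC; exact.
- have := @ultra_min (t1 + t2) (- t1) p pp h12; rewrite oppr_eq0 abszN (addrC t1) addrK.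
  by rewrite minnC; apply.
Qed.

Lemma max4 (a b c d : int) :
  Num.max a (Num.max b (Num.max c d)) = Num.max d (Num.max c (Num.max a b)).
Proof.
by apply/eqP; rewrite eq_le !ge_max !le_max !lexx !orbT.
Qed.

Definition T1 (v s1 u1 u2 u3 y1 : int) := s1 * u1 ^+ 2 * u2 * u3 * v ^+ 2 * y1 ^+ 2.
Definition T2 (v s2 u1 u2 u3 y2 : int) := s2 * u1 * u2 ^+ 2 * u3 * v ^+ 2 * y2 ^+ 2.
Definition T3 (v u1 u2 u3 y1 y2 y3 : int) := u1 ^+ 2 * u2 ^+ 2 * u3 ^+ 2 * v ^+ 3 * y1 * y2 * y3.
Definition T4 (s1 s2 s3 : int) := - (s1 * s2 * s3).

Definition Gf (p : param) (b : bool) : pt :=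
  let '(v, (s1, s2, s3), (u1, u2, u3), (y1, y2, y3)) := p in
  let t1 := T1 v s1 u1 u2 u3 y1 in
  let t2 := T2 v s2 u1 u2 u3 y2 in
  let t3 := if b then T3 v u1 u2 u3 y1 y2 y3 else - T3 v u1 u2 u3 y1 y2 y3 in
  let t4 := T4 s1 s2 s3 in
  if 0 < t1 then (t1, t2, t3, t4) else (- t1, - t2, - t3, - t4).

Definition sgi (b : bool) (n : nat) : int := if b then n%:Z else - n%:Z.

Definition Hbody (t1 t2 t3 t4 : int) : param * bool :=
  let P1 := `|t1|%N in let P2 := `|t2|%N in let P5 := `|(t1 + t2)%R|%N in
  let Q3 := `|t3|%N in let N := `|t4|%N in
  ((Posz (cV P1 P2 P5 Q3 N),
    (Posz (cS1 P1 P2 P5 Q3 N), Posz (cS2 P1 P2 P5 Q3 N), Posz (cS3 P1 P2 P5 Q3 N)),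
    (sgi (0 < t2) (ca1 P1 P2 P5 Q3 N), sgi (0 < t1) (ca2 P1 P2 P5 Q3 N), Posz (ca3 P1 P2 P5 Q3 N)),
    (Posz (cY1 P1 P2 P5 Q3 N), Posz (cY2 P1 P2 P5 Q3 N), Posz (cY3 P1 P2 P5 Q3 N))), 0 < t3).

Definition Hf (x : pt) : param * bool :=
  let '(a, b, c, d) := x in
  let e : int := if d < 0 then 1 else -1 in
  Hbody (e * a) (e * b) (e * c) (e * d).

Lemma Gf_eq v s1 s2 s3 u1 u2 u3 y1 y2 y3 b :
  Gf (v, (s1, s2, s3), (u1, u2, u3), (y1, y2, y3)) b =
  let t3 := if b then T3 v u1 u2 u3 y1 y2 y3 else - T3 v u1 u2 u3 y1 y2 y3 in
  if 0 < T1 v s1 u1 u2 u3 y1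
  then (T1 v s1 u1 u2 u3 y1, T2 v s2 u1 u2 u3 y2, t3, T4 s1 s2 s3)
  else (- T1 v s1 u1 u2 u3 y1, - T2 v s2 u1 u2 u3 y2, - t3, - T4 s1 s2 s3).
Proof. by []. Qed.

Lemma Hf_pos t1 t2 t3 t4 : t4 < 0 -> Hf (t1, t2, t3, t4) = Hbody t1 t2 t3 t4.
Proof. by move=> h; rewrite /Hf h !mul1r. Qed.

Lemma Hf_neg t1 t2 t3 t4 : t4 < 0 -> Hf (- t1, - t2, - t3, - t4) = Hbody t1 t2 t3 t4.
Proof.
move=> h; rewrite /Hf.
have -> : (- t4 < 0) = false by rewrite oppr_lt0; apply/negbTE; rewrite -leNgt ltW.
by rewrite !mulN1r !opprK.
Qed.

Lemma prim_of (a b c d : int) :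
  gcdn `|a| (gcdn `|b| (gcdn `|c| `|d|)) = 1%N -> primitive4 (a, b, c, d).
Proof. by rewrite /primitive4 /gcdz !absz_nat => ->. Qed.

Lemma onS_N a b c d : onS (- a, - b, - c, - d) = onS (a, b, c, d).
Proof.
rewrite /onS.
have -> : (- a) * (- b) * (- a + - b) = - (a * b * (a + b)) by ring.
have -> : (- c) ^+ 2 * (- d) = - (c ^+ 2 * d) by ring.
by rewrite eqr_opp.
Qed.

Lemma lines_nz (a b c d : int) : a != 0 -> b != 0 -> c != 0 -> d != 0 -> ~~ on_lines (a, b, c, d).
Proof.
by move=> a0 b0 c0 d0; rewrite /on_lines (negbTE a0) (negbTE b0) (negbTE c0) (negbTE d0).
Qed.

Lemma height_N a b c d : height (- a, - b, - c, - d) = height (a, b, c, d).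
Proof. by rewrite /height !normrN. Qed.

Lemma sq_gt0 (x : int) : x != 0 -> 0 < x ^+ 2.
Proof. by move=> h; rewrite exprn_even_gt0 // h orbT. Qed.

Lemma sgi_abs (x : int) : x != 0 -> sgi (0 < x) `|x|%N = x.
Proof.
move=> h; rewrite /sgi; case: ifP => hx; first by rewrite gtz0_abs.
have : x < 0 by rewrite lt_neqAle h /= leNgt hx.
by move=> /ltz0_abs ->; rewrite opprK.
Qed.

Lemma heightG v s1 s2 s3 u1 u2 u3 y1 y2 y3 b :
  height (Gf (v, (s1, s2, s3), (u1, u2, u3), (y1, y2, y3)) b) =
  Psi v (s1, s2, s3) (u1, u2, u3) (y1, y2, y3).
Proof.
rewrite /Gf /Psi /height /T1 /T2 /T3 /T4.
by case: ifP => _; case: b; rewrite ?normrN max4.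
Qed.

Lemma absT v s1 s2 s3 u1 u2 u3 y1 y2 y3 :
  [/\ `|T1 v s1 u1 u2 u3 y1|%N = P1N `|v| `|s1| `|s2| `|s3| `|u1| `|u2| `|u3| `|y1| `|y2| `|y3|,
      `|T2 v s2 u1 u2 u3 y2|%N = P2N `|v| `|s1| `|s2| `|s3| `|u1| `|u2| `|u3| `|y1| `|y2| `|y3|,
      `|T3 v u1 u2 u3 y1 y2 y3|%N = T3N `|v| `|s1| `|s2| `|s3| `|u1| `|u2| `|u3| `|y1| `|y2| `|y3|,
      `|T4 s1 s2 s3|%N = NN `|v| `|s1| `|s2| `|s3| `|u1| `|u2| `|u3| `|y1| `|y2| `|y3| &
      `|(s3 * u1 * u2 * u3 ^+ 2 * v ^+ 2 * y3 ^+ 2)%R|%N =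
        P5N `|v| `|s1| `|s2| `|s3| `|u1| `|u2| `|u3| `|y1| `|y2| `|y3|].
Proof.
rewrite /T1 /T2 /T3 /T4 /P1N /P2N /P5N /T3N /NN ?abszN !abszM.
by split; ring.
Qed.

Lemma sum12 v s1 s2 s3 u1 u2 u3 y1 y2 y3 :
  s1 * u1 * y1 ^+ 2 + s2 * u2 * y2 ^+ 2 + s3 * u3 * y3 ^+ 2 = 0 ->
  T1 v s1 u1 u2 u3 y1 + T2 v s2 u1 u2 u3 y2 = - (s3 * u1 * u2 * u3 ^+ 2 * v ^+ 2 * y3 ^+ 2).
Proof.
move=> E.
have E' : s1 * u1 * y1 ^+ 2 + s2 * u2 * y2 ^+ 2 = - (s3 * u3 * y3 ^+ 2).
  by apply/eqP; rewrite -subr_eq0 opprK E.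
have -> : T1 v s1 u1 u2 u3 y1 + T2 v s2 u1 u2 u3 y2 =
  u1 * u2 * u3 * v ^+ 2 * (s1 * u1 * y1 ^+ 2 + s2 * u2 * y2 ^+ 2).
  by rewrite /T1 /T2; ring.
by rewrite E'; ring.
Qed.

Lemma Posz_inj1 (n : nat) : Posz n = Posz 1 -> n = 1%N.
Proof. by case. Qed.

Lemma paramN_of (R : realType) (B : R) v s1 s2 s3 u1 u2 u3 y1 y2 y3 :
  param_ok B (v, (s1, s2, s3), (u1, u2, u3), (y1, y2, y3)) ->
  paramN `|v| `|s1| `|s2| `|s3| `|u1| `|u2| `|u3| `|y1| `|y2| `|y3|.
Proof.
case=> v0 [s10 s20 s30] u30 [y10 y20 y30] [_ _ Hmob Hg [[g12 g13 g23] [gy1 gy2 gy3]]].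
have [un0 Hmu] := proj1 (mobius_log _) Hmob.
rewrite !abszM !muln_gt0 in un0; case/andP: un0 => /andP[u10 u20] u30'.
have pos (x : int) : 0 < x -> (0 < `|x|)%N by move=> h; rewrite absz_gt0 gt_eqF.
have V0 := pos _ v0; have S10 := pos _ s10; have S20 := pos _ s20; have S30 := pos _ s30.
have Y10 := pos _ y10; have Y20 := pos _ y20; have Y30 := pos _ y30.
split; first by split.
move=> p pp.
have hu := Hmu p pp; rewrite !abszM !lognM ?muln_gt0 ?u10 ?u20 ?u30' // in hu.
have hg : gcdn (`|s1| * `|s2| * `|s3|) (`|u1| * `|u2| * `|u3| * `|v|) = 1%N.
  by move/Posz_inj1: Hg; rewrite !abszM.
have P3 : (0 < `|s1| * `|s2| * `|s3|)%N by rewrite !muln_gt0 S10 S20 S30.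
have P4 : (0 < `|u1| * `|u2| * `|u3| * `|v|)%N by rewrite !muln_gt0 u10 u20 u30' V0.
have hs := proj1 (@gcd1_log _ _ P3 P4) hg p pp.
rewrite !lognM ?muln_gt0 ?u10 ?u20 ?u30' ?V0 ?S10 ?S20 ?S30 // in hs.
have h12 := proj1 (@gcd1_log _ _ Y10 Y20) (@Posz_inj1 _ g12) p pp.
have h13 := proj1 (@gcd1_log _ _ Y10 Y30) (@Posz_inj1 _ g13) p pp.
have h23 := proj1 (@gcd1_log _ _ Y20 Y30) (@Posz_inj1 _ g23) p pp.
have k1 : _ := proj1 (@gcd3_log _ _ _ Y10 S20 S30) (@Posz_inj1 _ gy1) p pp.
have k2 : _ := proj1 (@gcd3_log _ _ _ Y20 S10 S30) (@Posz_inj1 _ gy2) p pp.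
have k3 : _ := proj1 (@gcd3_log _ _ _ Y30 S10 S20) (@Posz_inj1 _ gy3) p pp.
split; try lia; split; lia.
Qed.

Ltac ipos := repeat first [ done | (apply: exprn_gt0; done) | (apply: sq_gt0; done) | apply: mulr_gt0 ].

Ltac ipos1 := first [ done | (apply: sq_gt0; done) | (apply: exprn_gt0; solve [ipos1]) | (apply: mulr_gt0; [solve [ipos1] | solve [ipos1]]) ].

Lemma G_core (R : realType) (B : R) v s1 s2 s3 u1 u2 u3 y1 y2 y3 b :
  param_ok B (v, (s1, s2, s3), (u1, u2, u3), (y1, y2, y3)) ->
  NU_set B (Gf (v, (s1, s2, s3), (u1, u2, u3), (y1, y2, y3)) b) /\
  Hf (Gf (v, (s1, s2, s3), (u1, u2, u3), (y1, y2, y3)) b) =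
    ((v, (s1, s2, s3), (u1, u2, u3), (y1, y2, y3)), b).
Proof.
move=> H; have HN := @paramN_of _ _ _ _ _ _ _ _ _ _ _ _ H.
move: (H) => [v0 [s10 s20 s30] u30 [y10 y20 y30] [HPsi Heq Hmob _ _]].
have [un0 _] := proj1 (mobius_log _) Hmob.
rewrite !abszM !muln_gt0 !absz_gt0 in un0; case/andP: un0 => /andP[u10 u20] _.
have [A1 A2 A3 A4 A5] := absT v s1 s2 s3 u1 u2 u3 y1 y2 y3.
have E12 := @sum12 v s1 s2 s3 u1 u2 u3 y1 y2 y3 Heq.
set t1 := T1 v s1 u1 u2 u3 y1 in A1 E12 *.
set t2 := T2 v s2 u1 u2 u3 y2 in A2 E12 *.
set T := T3 v u1 u2 u3 y1 y2 y3 in A3 *.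
set t4 := T4 s1 s2 s3 in A4 *.
have A12 : `|(t1 + t2)%R|%N = P5N `|v| `|s1| `|s2| `|s3| `|u1| `|u2| `|u3| `|y1| `|y2| `|y3|.
  by rewrite E12 abszN A5.
have [ap _] := HN.
have [x1 x2 x5 x3 xN] := @allpos_X _ _ _ _ _ _ _ _ _ _ ap.
have t1n : t1 != 0 by rewrite -absz_gt0 A1.
have t2n : t2 != 0 by rewrite -absz_gt0 A2.
have Tn : T != 0 by rewrite -absz_gt0 A3.
have t4n : t4 != 0 by rewrite -absz_gt0 A4.
have t12n : t1 + t2 != 0 by rewrite -absz_gt0 A12.
have Hu : ultra (P1N `|v| `|s1| `|s2| `|s3| `|u1| `|u2| `|u3| `|y1| `|y2| `|y3|)
   (P2N `|v| `|s1| `|s2| `|s3| `|u1| `|u2| `|u3| `|y1| `|y2| `|y3|)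
   (P5N `|v| `|s1| `|s2| `|s3| `|u1| `|u2| `|u3| `|y1| `|y2| `|y3|).
  by rewrite -A1 -A2 -A12; apply: ultraZ.
have [Hg [cv [cs1 cs2 cs3] [ca1 ca2 ca3] [cy1 cy2 cy3]]] :=
  @fwd_core _ _ _ _ _ _ _ _ _ _ HN Hu.
have sg1 : (0 < t1) = (0 < u2).
  have -> : t1 = u2 * (s1 * u1 ^+ 2 * u3 * v ^+ 2 * y1 ^+ 2) by rewrite /t1 /T1; ring.
  by rewrite pmulr_lgt0 //; ipos.
have sg2 : (0 < t2) = (0 < u1).
  have -> : t2 = u1 * (s2 * u2 ^+ 2 * u3 * v ^+ 2 * y2 ^+ 2) by rewrite /t2 /T2; ring.
  by rewrite pmulr_lgt0 //; ipos.
have T0 : 0 < T by rewrite /T /T3; ipos.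
have t40 : t4 < 0 by rewrite /t4 /T4 oppr_lt0; ipos.
have onq : onS (t1, t2, if b then T else - T, t4).
  rewrite /onS E12 /t1 /t2 /T /t4 /T1 /T2 /T3 /T4; apply/eqP; case: b; ring.
have Hb : Hbody t1 t2 (if b then T else - T) t4 =
    ((v, (s1, s2, s3), (u1, u2, u3), (y1, y2, y3)), b).
  rewrite /Hbody A1 A2 A12 A4.
  have -> : `|(if b then T else - T)|%N = T3N `|v| `|s1| `|s2| `|s3| `|u1| `|u2| `|u3| `|y1| `|y2| `|y3|.
    by case: (b); rewrite ?abszN A3.
  rewrite cv cs1 cs2 cs3 ca1 ca2 ca3 cy1 cy2 cy3 sg1 sg2.
  rewrite !gtz0_abs // sgi_abs // sgi_abs //.
  by case: (b); rewrite ?oppr_gt0 ?T0 // ltNge ltW.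
have hq : height (t1, t2, if b then T else - T, t4) = Psi v (s1, s2, s3) (u1, u2, u3) (y1, y2, y3).
  have hT : `|(if b then T else - T)| = `|T| by case: (b); rewrite ?normrN.
  rewrite /height hT /t4 /T4 normrN max4; by [].
have gq : gcdn `|t1| (gcdn `|t2| (gcdn `|(if b then T else - T)| `|t4|)) = 1%N.
  by rewrite A1 A2 A4; case: (b); rewrite ?abszN A3.
rewrite Gf_eq; cbv zeta; rewrite -/t1 -/t2 -/T -/t4.
case: ifP => h1.
- split; last by rewrite Hf_pos.
  split; first by rewrite /projrep prim_of //= h1.
  split; first by rewrite /inU onq lines_nz //; case: (b); rewrite ?oppr_eq0.
  by rewrite hq.
- split; last by rewrite Hf_neg.
  split.
    rewrite /projrep prim_of /=; last by move: gq; rewrite !abszN.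
    by rewrite oppr_gt0 lt_neqAle t1n /= leNgt h1.
  split; first by rewrite /inU onS_N onq /=; apply: lines_nz; rewrite oppr_eq0 //; case: (b); rewrite ?oppr_eq0.
  by rewrite height_N hq.
Qed.

Lemma absz_sgi b n : `|sgi b n|%N = n.
Proof. by case: b; rewrite /sgi ?abszN. Qed.

Lemma sgi_gt0 b n : (0 < n)%N -> (0 < sgi b n) = b.
Proof.
by case: b => h; rewrite /sgi ?ltz_nat // oppr_gt0 ltNge ltW // ltz_nat.
Qed.

Lemma int_eq_abs (x y : int) : `|x|%N = `|y|%N -> (0 < x) = (0 < y) -> x != 0 -> y != 0 -> x = y.
Proof.
move=> ha hs x0 y0.
case: (ltrgt0P x) hs => hx; last by move/eqP: x0.
  by move=> /esym hy; rewrite -(gtz0_abs hx) -(gtz0_abs hy) ha.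
move=> hs; have hy : y < 0 by rewrite lt_neqAle y0 /= leNgt -hs.
by rewrite -(opprK x) -(ltz0_abs hx) -(opprK y) -(ltz0_abs hy) ha.
Qed.

Lemma Hbody_core (R : realType) (B : R) t1 t2 t3 t4 :
  t4 < 0 -> t1 != 0 -> t2 != 0 -> t3 != 0 -> t1 + t2 != 0 ->
  onS (t1, t2, t3, t4) ->
  gcdn `|t1| (gcdn `|t2| (gcdn `|t3| `|t4|)) = 1%N ->
  (height (t1, t2, t3, t4))%:~R <= B ->
  param_ok B (Hbody t1 t2 t3 t4).1 /\
  Gf (Hbody t1 t2 t3 t4).1 (Hbody t1 t2 t3 t4).2 =
    if 0 < t1 then (t1, t2, t3, t4) else (- t1, - t2, - t3, - t4).
Proof.
move=> t40 t1n t2n t3n t12n onq gq hB.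
have t4n : t4 != 0 by rewrite lt_eqF.
set P1 := `|t1|%N; set P2 := `|t2|%N; set P5 := `|(t1 + t2)%R|%N; set Q3 := `|t3|%N; set N := `|t4|%N.
have h1 : (0 < P1)%N by rewrite absz_gt0.
have h2 : (0 < P2)%N by rewrite absz_gt0.
have h5 : (0 < P5)%N by rewrite absz_gt0.
have h3 : (0 < Q3)%N by rewrite absz_gt0.
have hN : (0 < N)%N by rewrite absz_gt0.
have Hprod : (P1 * P2 * P5 = Q3 ^ 2 * N)%N.
  by move: (congr1 absz (eqP onq)); rewrite !abszM -/P1 -/P2 -/P5 -/Q3 -/N mulnn.
have Hu : ultra P1 P2 P5 by apply: ultraZ.
have [[ap Hc] [E1 E2 E5 E3 EN]] := @back_core _ _ _ _ _ h1 h2 h5 h3 hN Hprod gq Hu.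
move: (ap) => [V0 [S10 S20 S30] [a10 a20 a30] [Y10 Y20 Y30]].
rewrite /Hbody -/P1 -/P2 -/P5 -/Q3 -/N /=.
set V := cV P1 P2 P5 Q3 N in E1 E2 E5 E3 EN *.
set S1 := cS1 P1 P2 P5 Q3 N in E1 E2 E5 E3 EN *; set S2 := cS2 P1 P2 P5 Q3 N in E1 E2 E5 E3 EN *; set S3 := cS3 P1 P2 P5 Q3 N in E1 E2 E5 E3 EN *.
set a1 := ca1 P1 P2 P5 Q3 N in E1 E2 E5 E3 EN *; set a2 := ca2 P1 P2 P5 Q3 N in E1 E2 E5 E3 EN *; set a3 := ca3 P1 P2 P5 Q3 N in E1 E2 E5 E3 EN *.
set Y1 := cY1 P1 P2 P5 Q3 N in E1 E2 E5 E3 EN *; set Y2 := cY2 P1 P2 P5 Q3 N in E1 E2 E5 E3 EN *; set Y3 := cY3 P1 P2 P5 Q3 N in E1 E2 E5 E3 EN *.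
set u1 := sgi (0 < t2) a1; set u2 := sgi (0 < t1) a2.
have [A1 A2 A3 A4 A5] := absT V S1 S2 S3 u1 u2 a3 Y1 Y2 Y3.
rewrite /u1 /u2 !absz_sgi !absz_nat in A1 A2 A3 A4 A5.
have u1n : u1 != 0 by rewrite -absz_gt0 /u1 absz_sgi.
have u2n : u2 != 0 by rewrite -absz_gt0 /u2 absz_sgi.
have eT1 : T1 V S1 u1 u2 a3 Y1 = t1.
  apply: int_eq_abs; first by rewrite A1 -E1.
  - have -> : T1 V S1 u1 u2 a3 Y1 = u2 * (S1%:Z * u1 ^+ 2 * a3%:Z * V%:Z ^+ 2 * Y1%:Z ^+ 2).
      by rewrite /T1; ring.
    by rewrite pmulr_lgt0 /u2 ?sgi_gt0 //; ipos.
  - by rewrite -absz_gt0 A1 -E1.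
  - done.
have eT2 : T2 V S2 u1 u2 a3 Y2 = t2.
  apply: int_eq_abs; first by rewrite A2 -E2.
  - have -> : T2 V S2 u1 u2 a3 Y2 = u1 * (S2%:Z * u2 ^+ 2 * a3%:Z * V%:Z ^+ 2 * Y2%:Z ^+ 2).
      by rewrite /T2; ring.
    by rewrite pmulr_lgt0 /u1 ?sgi_gt0 //; ipos.
  - by rewrite -absz_gt0 A2 -E2.
  - done.
have eT3 : (if 0 < t3 then T3 V u1 u2 a3 Y1 Y2 Y3 else - T3 V u1 u2 a3 Y1 Y2 Y3) = t3.
  have T3p : 0 < T3 V u1 u2 a3 Y1 Y2 Y3.
    by rewrite /T3; ipos.
  rewrite -(gtz0_abs T3p) A3 -E3 -/(sgi (0 < t3) Q3); exact: sgi_abs.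
have eT4 : T4 S1 S2 S3 = t4.
  by rewrite /T4 -!PoszM -/(NN V S1 S2 S3 a1 a2 a3 Y1 Y2 Y3) -EN /N ltz0_abs // opprK.
split; last by rewrite eT1 eT2 eT3 eT4.
have SP : (0 < S1 * S2 * S3)%N by rewrite !muln_gt0 S10 S20 S30.
have UP : (0 < a1 * a2 * a3 * V)%N by rewrite !muln_gt0 a10 a20 a30 V0.
have UP3 : (0 < a1 * a2 * a3)%N by rewrite !muln_gt0 a10 a20 a30.
split => //; split.
- have hP := heightG V S1 S2 S3 u1 u2 a3 Y1 Y2 Y3 (0 < t3); rewrite /Psi /= in hP.
  by rewrite -hP eT1 eT2 eT3 eT4; case: ifP => _; rewrite ?height_N.
- set W := S1%:Z * u1 * Y1%:Z ^+ 2 + S2%:Z * u2 * Y2%:Z ^+ 2.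
  set Z := S3%:Z * a3%:Z * Y3%:Z ^+ 2.
  set D := u1 * u2 * a3%:Z * V%:Z ^+ 2.
  have hsum : t1 + t2 = D * W by rewrite -eT1 -eT2 /T1 /T2 /D /W; ring.
  have hZ : S3%:Z * u1 * u2 * a3%:Z ^+ 2 * V%:Z ^+ 2 * Y3%:Z ^+ 2 = D * Z by rewrite /D /Z; ring.
  have a3n : a3%:Z != 0 by rewrite -absz_gt0.
  have Vn : V%:Z != 0 by rewrite -absz_gt0.
  have Dn : D != 0 by rewrite /D !mulf_neq0 // expf_neq0.
  have habs : `|W|%N = `|Z|%N.
    have : `|(D * W)%R|%N = `|(D * Z)%R|%N by rewrite -hsum -hZ -/P5 A5 E5.
    by rewrite (abszM D W) (abszM D Z) => /eqP; rewrite eqn_mul2l absz_eq0 (negbTE Dn) /= => /eqP.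
  have Z0 : 0 < Z by rewrite /Z; ipos1.
  have Wneg : W < 0.
    have hprod : t1 * t2 * (t1 + t2) =
      (S1%:Z * S2%:Z * (u1 ^+ 2) ^+ 2 * (u2 ^+ 2) ^+ 2 * a3%:Z ^+ 3 * V%:Z ^+ 6 * Y1%:Z ^+ 2 * Y2%:Z ^+ 2) * W.
      by rewrite hsum -eT1 -eT2 /T1 /T2 /D; ring.
    have : t1 * t2 * (t1 + t2) < 0.
      by rewrite (eqP onq) pmulr_rlt0 // sq_gt0.
    by rewrite hprod pmulr_rlt0 //; ipos1.
  have hW : W = - Z by rewrite -(opprK W) -(ltz0_abs Wneg) habs gtz0_abs.
  by rewrite -/W -/Z hW addNr.
- rewrite /mobiusz !abszM /u1 /u2 !absz_sgi absz_nat; apply/mobius_log; split => // p pp.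
  case: (Hc p pp) => Hm _ _ _; rewrite !lognM ?muln_gt0 ?a10 ?a20 ?a30 //.
- rewrite /gcdz !abszM /u1 /u2 !absz_sgi !absz_nat; congr Posz.
  apply/(@gcd1_log _ _ SP UP) => p pp; case: (Hc p pp) => _ Hs _ _.
  rewrite !lognM ?muln_gt0 ?a10 ?a20 ?a30 ?V0 ?S10 ?S20 ?S30 //; lia.
- split; split; rewrite /gcdz !absz_nat; congr Posz.
  + apply/(@gcd1_log _ _ Y10 Y20) => p pp; case: (Hc p pp) => _ _ [? ? ?] _; lia.
  + apply/(@gcd1_log _ _ Y10 Y30) => p pp; case: (Hc p pp) => _ _ [? ? ?] _; lia.
  + apply/(@gcd1_log _ _ Y20 Y30) => p pp; case: (Hc p pp) => _ _ [? ? ?] _; lia.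
  + apply/(@gcd3_log _ _ _ Y10 S20 S30) => p pp; case: (Hc p pp) => _ _ _ [? ? ?]; lia.
  + apply/(@gcd3_log _ _ _ Y20 S10 S30) => p pp; case: (Hc p pp) => _ _ _ [? ? ?]; lia.
  + apply/(@gcd3_log _ _ _ Y30 S10 S20) => p pp; case: (Hc p pp) => _ _ _ [? ? ?]; lia.
Qed.


Lemma H_core (R : realType) (B : R) x : NU_set B x ->
  param_ok B (Hf x).1 /\ Gf (Hf x).1 (Hf x).2 = x.
Proof.
case: x => [[[a b] c] d] [/andP[prim fnz] [/andP[onq nl] hB]].
have key : a * b * (a + b) = c ^+ 2 * d := eqP onq.
have cn : c != 0.
  apply: contraNneq nl => c0; move: key; rewrite c0 expr0n mul0r => /eqP.
  by rewrite !mulf_eq0 => /orP[/orP[]|] /eqP h; rewrite /on_lines h ?eqxx ?orbT.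
have dn : d != 0.
  apply: contraNneq nl => d0; move: key; rewrite d0 mulr0 => /eqP.
  by rewrite !mulf_eq0 => /orP[/orP[]|] /eqP h; rewrite /on_lines h ?eqxx ?orbT.
have : a * b * (a + b) != 0 by rewrite key mulf_neq0 // expf_neq0.
rewrite !mulf_eq0 !negb_or => /andP[/andP[an bn] abn].
have a0 : 0 < a by move: fnz; rewrite /first_nonzero_pos (negbTE an) orbF.
have gq : gcdn `|a| (gcdn `|b| (gcdn `|c| `|d|)) = 1%N.
  by move: prim; rewrite /primitive4 /gcdz !absz_nat => /eqP [].
case: (ltrgt0P d) => hd; last by move/eqP: dn.
- have -> : Hf (a, b, c, d) = Hbody (- a) (- b) (- c) (- d).
    by rewrite -Hf_neg ?opprK // oppr_lt0.
  have := @Hbody_core R B (- a) (- b) (- c) (- d).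
  rewrite oppr_lt0 hd !oppr_eq0 an bn cn -opprD oppr_eq0 abn onS_N onq !abszN gq height_N.
  move=> /(_ isT isT isT isT isT isT erefl hB) [Hp ->]; split => //.
  by rewrite oppr_gt0 ltNge ltW //= !opprK.
- rewrite Hf_pos //.
  have := @Hbody_core R B a b c d hd an bn cn abn onq gq hB.
  by rewrite a0.
Qed.

End IntPart.

Section Fin.
Local Open Scope ring_scope.

Lemma box_pre (K : nat) (z : int) : `|z| < K%:Z -> exists i : 'I_(2 * K).+1, (i : nat)%:Z - K%:Z = z.
Proof.
rewrite ltr_norml => /andP[h1 h2].
have hz : (`|(z + K%:Z)%R| < (2 * K).+1)%N by lia.
exists (inord `|(z + K%:Z)%R|); rewrite inordK // gez0_abs; first by rewrite addrK.
lia.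
Qed.

Lemma NU_finite (R : realType) (B : R) : finite_set (NU_set B).
Proof.
set K := (Num.truncn B).+1.
have hK : B < K%:R := truncnS_gt B.
pose f (i : 'I_(2 * K).+1 * 'I_(2 * K).+1 * 'I_(2 * K).+1 * 'I_(2 * K).+1) : pt :=
  let '(i1, i2, i3, i4) := i in
  ((i1 : nat)%:Z - K%:Z, (i2 : nat)%:Z - K%:Z, (i3 : nat)%:Z - K%:Z, (i4 : nat)%:Z - K%:Z).
apply: (@sub_finite_set _ _ (f @` setT)%classic); last exact: finite_image.
case=> [[[a b] c] d] [_ [_ hB]].
have hh : height (a, b, c, d) < K%:Z.
  by rewrite -(ltr_int R); apply: le_lt_trans hB hK.
move: hh; rewrite /height !gt_max => /and4P[ha hb hc hd].
have [i1 e1] := @box_pre _ _ ha; have [i2 e2] := @box_pre _ _ hb.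
have [i3 e3] := @box_pre _ _ hc; have [i4 e4] := @box_pre _ _ hd.
by exists (i1, i2, i3, i4) => //=; rewrite e1 e2 e3 e4.
Qed.
End Fin.

Local Open Scope classical_set_scope.
Local Open Scope fset_scope.

Theorem lemma4p4 (R : realType) (B : R) :
  [/\ finite_set (NU_set B), finite_set (param_set B) &
      #|` fset_set (NU_set B)| = (2 * #|` fset_set (param_set B)|)%N].
Proof.
have Gc p b : param_set B p -> NU_set B (Gf p b) /\ Hf (Gf p b) = (p, b).
  by case: p => [[[v [[s1 s2] s3]] [[u1 u2] u3]] [[y1 y2] y3]] H; apply: G_core.
have Hc := @H_core R B.
have fX := @NU_finite R B.
have fP : finite_set (param_set B).
  apply: (sub_finite_set _ (finite_image (fun x => (Hf x).1) fX)).
  move=> p Pp; exists (Gf p true); first exact: (Gc p true Pp).1.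
  by rewrite (Gc p true Pp).2.
split => //.
have eX : NU_set B = ((fun p => Gf p true) @` param_set B `|` (fun p => Gf p false) @` param_set B)%classic.
  apply/seteqP; split.
  - move=> x Xx; have [Hp HG] := Hc x Xx.
    case E: (Hf x).2 HG => HG; [left | right]; by exists (Hf x).1.
  - by move=> x [[p Pp <-]|[p Pp <-]]; exact: (Gc _ _ Pp).1.
rewrite eX fset_setU; [|exact: finite_image|exact: finite_image].
rewrite !fset_set_image //.
have := cardfsUI ((fun p => Gf p true) @` fset_set (param_set B))
                 ((fun p => Gf p false) @` fset_set (param_set B)).
have -> : ((fun p => Gf p true) @` fset_set (param_set B)) `&`
          ((fun p => Gf p false) @` fset_set (param_set B)) = fset0.
  apply/fsetP => x; rewrite !inE; apply/negP => /andP[/imfsetP[p Pp ->] /imfsetP[q Pq e]].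
  move: Pp Pq; rewrite !in_fset_set // !inE => Pp Pq.
  by have := congr1 Hf e; rewrite (Gc p true Pp).2 (Gc q false Pq).2.
rewrite cardfs0 addn0 => ->.
rewrite !card_in_imfset /=.
- by rewrite mul2n addnn.
- move=> p q; rewrite !in_fset_set // !inE => Pp Pq e.
  by have := congr1 Hf e; rewrite (Gc p false Pp).2 (Gc q false Pq).2 => -[].
- move=> p q; rewrite !in_fset_set // !inE => Pp Pq e.
  by have := congr1 Hf e; rewrite (Gc p true Pp).2 (Gc q true Pq).2 => -[].
Qed.
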